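(* Let $k\ge 2$, $G=\Theta(2,2,2k)$, $m\ge 4$, and let $L$ be an $m$-assignment for $G$. If $wz\in E(G)$ is an edge for which there exist $x\in L(w)-L(z)$ and $y\in L(z)-L(w)$, then there are at least $(m-1)^{2k-1}(m-2)^2$ proper $L$-colorings of $G$ that color $w$ with $x$ and $z$ with $y$.
   Context: $\Theta(l_1,l_2,l_3)$ denotes two end vertices joined by three internally disjoint paths of lengths $l_1,l_2,l_3$. An $m$-assignment $L$ assigns to each vertex a set of $m$ colors; a proper $L$-coloring is a proper coloring $f$ with $f(v)\in L(v)$ for each vertex $v$. *)

(* Defs.v *)
From mathcomp Require Import all_boot.
Set Implicit Arguments. Unset Strict Implicit. Unset Printing Implicit Defensive.

(* Concrete labelling of Theta(2,2,2k) on vertices 0 .. 2k+2: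
   0 and 1 are the two end vertices;
   2 is the internal vertex of the first path of length 2 (0-2-1);
   3 is the internal vertex of the second path of length 2 (0-3-1);
   4, 5, ..., 2k+2 are the 2k-1 internal vertices of the path of length 2k
   (0-4-5-...-(2k+2)-1). *)
Definition theta_nv (k : nat) : nat := (2 * k + 3)%N.

Definition theta_dir_edge (k i j : nat) : bool :=
  [|| (i == 0) && (j == 2), (i == 2) && (j == 1),
      (i == 0) && (j == 3), (i == 3) && (j == 1),
      (i == 0) && (j == 4),
      [&& 4 <= i, j == i.+1 & j <= 2 * k + 2]
    | (i == 2 * k + 2) && (j == 1)].

Definition theta_adj (k : nat) : rel 'I_(theta_nv k) :=
  fun i j => theta_dir_edge k i j || theta_dir_edge k j i.

Arguments theta_adj k : clear implicits.

Definition proper_L_coloring (k : nat) (C : finType)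
    (L : 'I_(theta_nv k) -> {set C}) (f : {ffun 'I_(theta_nv k) -> C}) : bool :=
  [forall v, f v \in L v] &&
  [forall u, forall v, theta_adj k u v ==> (f u != f v)].

(* Main.v *)
Require Import Defs.
From mathcomp Require Import all_boot zify.
Set Implicit Arguments. Unset Strict Implicit. Unset Printing Implicit Defensive.
Definition good (V C : finType) (adj : rel V) (L : V -> {set C}) (c0 : C)
  (w z : V) (x y : C) (S : {set V}) (f : {ffun V -> C}) : bool :=
  [&& [forall v, (v \in S) ==> (f v \in L v)],
      [forall u, forall v, [&& u \in S, v \in S & adj u v] ==> (f u != f v)],
      [forall v, (v \notin S) ==> (f v == c0)], f w == x & f z == y].

Definition cnt (V C : finType) (adj : rel V) (L : V -> {set C}) (c0 : C)
  (w z : V) (x y : C) (S : {set V}) :=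
  #|[set f | good adj L c0 w z x y S f]|.

Lemma card_dep (T1 T2 : finType) (A : {set T1}) (B : T1 -> {set T2}) :
  #|[set p : T1 * T2 | (p.1 \in A) && (p.2 \in B p.1)]| = \sum_(a in A) #|B a|.
Proof.
rewrite -sum1_card.
transitivity (\sum_(a in A) \sum_(b in B a) 1).
  rewrite pair_big_dep /=. apply: eq_bigl => p; by rewrite inE.
by apply: eq_bigr => a _; rewrite sum1_card.
Qed.

Lemma step (V C : finType) (adj : rel V) (L : V -> {set C}) (c0 : C)
  (w z : V) (x y : C) (S : {set V}) (v : V) (m d : nat) :
  symmetric adj -> irreflexive adj -> (forall u, #|L u| = m) ->
  w \in S -> z \in S -> v \notin S ->
  #|[set u in S | adj v u]| <= d ->
  cnt adj L c0 w z x y S * (m - d) <= cnt adj L c0 w z x y (v |: S).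
Proof.
move=> sym irr cardL wS zS vS Nd.
set N := [set u in S | adj v u].
set G := [set f | good adj L c0 w z x y S f].
set B := fun f : {ffun V -> C} => L v :\: [set f u | u in N].
set D := [set p : {ffun V -> C} * C | (p.1 \in G) && (p.2 \in B p.1)].
have H1 : #|G| * (m - d) <= #|D|.
  rewrite card_dep -sum_nat_const; apply: leq_sum => f _.
  rewrite /B cardsD cardL leq_sub2l //.
  apply: leq_trans Nd; apply: leq_trans (leq_imset_card _ _).
  exact/subset_leq_card/subsetIr.
set h := fun p : {ffun V -> C} * C => [ffun u => if u == v then p.2 else p.1 u].
have inj : {in D &, injective h}.
  move=> [f c] [g c'] /[!inE] /andP[/= + _] /andP[/= + _] /= /ffunP E.
  move=> /and5P[_ _ /forallP Hf _ _] /and5P[_ _ /forallP Hg _ _].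
  have := E v; rewrite !ffunE eqxx /= => ->.
  congr pair; apply/ffunP => u; have := E u; rewrite !ffunE.
  case: eqP => [-> _|//]; by rewrite (eqP (implyP (Hf v) vS)) (eqP (implyP (Hg v) vS)).
have sub : h @: D \subset [set f | good adj L c0 w z x y (v |: S) f].
  apply/subsetP => _ /imsetP[[f c] fcD ->].
  move: fcD; rewrite /D inE /= => /andP[].
  rewrite /G inE => /and5P[/forallP HL /forallP HP /forallP H0 fw fz].
  rewrite /B inE => /andP[cN cL].
  rewrite inE.
  have wv : w != v by apply: contraNneq vS => <-.
  have zv : z != v by apply: contraNneq vS => <-.
  apply/and5P; split; rewrite ?ffunE ?(negbTE wv) ?(negbTE zv) //.
  - apply/forallP => u; rewrite ffunE in_setU1; case: eqP => [-> //|_] /=.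
    exact: HL.
  - apply/forallP => u; apply/forallP => u'; rewrite !ffunE !in_setU1.
    case: (eqVneq u v) => [->|uv]; case: (eqVneq u' v) => [->|u'v] /=.
    + by rewrite irr.
    + apply/implyP => /andP[u'S a]; apply: contra cN => /eqP ->.
      by apply/imsetP; exists u' => //; rewrite inE u'S a.
    + apply/implyP => /andP[uS a]; rewrite eq_sym; apply: contra cN => /eqP ->.
      by apply/imsetP; exists u => //; rewrite inE uS sym a.
    + exact: (forallP (HP u)).
  - apply/forallP => u; rewrite ffunE in_setU1 negb_or; case: eqP => //= _.
rewrite /cnt -/G; apply: leq_trans H1 _.
by rewrite -(card_in_imset inj); apply: subset_leq_card.
Qed.

Lemma base (V C : finType) (adj : rel V) (L : V -> {set C}) (w z : V) (x y : C) :
  irreflexive adj -> x \in L w -> y \in L z -> x != y -> w != z ->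
  0 < cnt adj L x w z x y [set w; z].
Proof.
move=> irr xL yL xy wz; rewrite /cnt card_gt0; apply/set0Pn.
exists [ffun u => if u == z then y else x]; rewrite inE.
apply/and5P; split; rewrite ?ffunE ?eqxx ?(negbTE wz) //.
- apply/forallP => u; rewrite !inE ffunE; apply/implyP.
  by case/orP => /eqP ->; rewrite ?eqxx ?(negbTE wz).
- apply/forallP => u; apply/forallP => u'; rewrite !inE !ffunE.
  apply/implyP => /and3P[]; case/orP => /eqP ->; case/orP => /eqP ->;
    rewrite ?irr ?eqxx ?(negbTE wz) // ?(eq_sym y) //.
- apply/forallP => u; rewrite !inE ffunE negb_or; apply/implyP => /andP[_ /negbTE ->] //.
Qed.

Lemma theta_sym k : symmetric (theta_adj k).
Proof. by move=> i j; rewrite /theta_adj orbC. Qed.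

Lemma theta_irr k : irreflexive (theta_adj k).
Proof. move=> i; rewrite /theta_adj /theta_dir_edge orbb; lia. Qed.

Definition TS k (P : nat -> bool) : {set 'I_(theta_nv k)} := [set u | P (val u)].

Lemma card_vals n (s : seq nat) (A : {set 'I_n}) :
  {subset [seq val u | u in A] <= s} -> #|A| <= size s.
Proof.
move=> sub; rewrite cardE -(size_map val).
apply: uniq_leq_size => //; rewrite map_inj_uniq ?enum_uniq //; exact: val_inj.
Qed.

Lemma stepP k m C (L : 'I_(theta_nv k) -> {set C}) (w z : 'I_(theta_nv k)) (x y : C)
   (P : nat -> bool) (v d : nat) (s : seq nat) :
  (forall u, #|L u| = m) -> P w -> P z -> ~~ P v -> v < theta_nv k -> size s <= d ->
  (forall u, u < theta_nv k -> P u -> theta_dir_edge k v u || theta_dir_edge k u v -> u \in s) ->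
  cnt (theta_adj k) L x w z x y (TS k P) * (m - d) <=
  cnt (theta_adj k) L x w z x y (TS k (fun n => P n || (n == v))).
Proof.
move=> cL Pw Pz Pv vN sd nb.
have -> : TS k (fun n => P n || (n == v)) = (Ordinal vN) |: TS k P.
  by apply/setP => u; rewrite !inE orbC -val_eqE.
apply: step.
- exact: theta_sym.
- exact: theta_irr.
- done.
- by rewrite inE.
- by rewrite inE.
- by rewrite inE.
apply: leq_trans sd; apply: card_vals => _ /mapP[u + ->].
rewrite mem_enum !inE => /andP[Pu a]; exact: (nb u (ltn_ord u) Pu a).
Qed.

Lemma eq_cntP k C (L : 'I_(theta_nv k) -> {set C}) (w z : 'I_(theta_nv k)) (x y : C)
   (P Q : nat -> bool) : (forall n, n < theta_nv k -> P n = Q n) ->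
  cnt (theta_adj k) L x w z x y (TS k P) = cnt (theta_adj k) L x w z x y (TS k Q).
Proof.
move=> PQ; have -> : TS k P = TS k Q by apply/setP => u; rewrite !inE (PQ _ (ltn_ord u)).
done.
Qed.

Lemma tfpath k m C (L : 'I_(theta_nv k) -> {set C}) (w z : 'I_(theta_nv k)) (x y : C)
   (P : nat -> bool) (i r : nat) :
  (forall u, #|L u| = m) -> P w -> P z ->
  (forall t, t < r -> (i + t + 1 < theta_nv k) && ~~ P (i + t + 1)) ->
  (forall t u, t < r -> u < theta_nv k -> P u || (i < u <= i + t) ->
     theta_dir_edge k (i + t + 1) u || theta_dir_edge k u (i + t + 1) -> u = i + t) ->
  cnt (theta_adj k) L x w z x y (TS k P) * (m - 1) ^ r <=
  cnt (theta_adj k) L x w z x y (TS k (fun n => P n || (i < n <= i + r))).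
Proof.
move=> cL Pw Pz H1 H2; elim: r H1 H2 => [|r IH] H1 H2.
  rewrite expn0 muln1 leq_eqVlt; apply/orP; left; apply/eqP.
  apply: eq_cntP => n _; lia.
have := IH (fun t ht => H1 t (ltnW (leq_trans ht (leqnn _))))
  (fun t u ht => H2 t u (leq_trans ht (leqnSn _))).
move=> {}IH; rewrite expnSr mulnA.
apply: leq_trans (leq_mul IH (leqnn _)) _.
have := H1 r (leqnn _) => /andP[rN Pr].
have st := @stepP k m C L w z x y (fun n => P n || (i < n <= i + r)) (i + r + 1) 1 [:: i + r] cL.
have {}st := st (introT orP (or_introl Pw)) (introT orP (or_introl Pz)).
have {}st := st ltac:(rewrite /= negb_or Pr /=; lia) rN (leqnn _).
have {}st := st ltac:(move=> u uN Pu a; rewrite inE; apply/eqP; exact: (H2 r u (leqnn _) uN Pu a)).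
apply: leq_trans st _; rewrite leq_eqVlt; apply/orP; left; apply/eqP.
apply: eq_cntP => n _ /=; case: (P n) => /=; lia.
Qed.

Lemma tbpath k m C (L : 'I_(theta_nv k) -> {set C}) (w z : 'I_(theta_nv k)) (x y : C)
   (P : nat -> bool) (i r : nat) :
  (forall u, #|L u| = m) -> P w -> P z -> r <= i ->
  (forall t, t < r -> (i - t - 1 < theta_nv k) && ~~ P (i - t - 1)) ->
  (forall t u, t < r -> u < theta_nv k -> P u || (i - t <= u < i) ->
     theta_dir_edge k (i - t - 1) u || theta_dir_edge k u (i - t - 1) -> u = i - t) ->
  cnt (theta_adj k) L x w z x y (TS k P) * (m - 1) ^ r <=
  cnt (theta_adj k) L x w z x y (TS k (fun n => P n || (i - r <= n < i))).
Proof.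
move=> cL Pw Pz ri H1 H2; elim: r ri H1 H2 => [|r IH] ri H1 H2.
  rewrite expn0 muln1 leq_eqVlt; apply/orP; left; apply/eqP.
  apply: eq_cntP => n _; lia.
have := IH (ltnW ri) (fun t ht => H1 t (ltnW (leq_trans ht (leqnn _))))
  (fun t u ht => H2 t u (leq_trans ht (leqnSn _))).
move=> {}IH; rewrite expnSr mulnA.
apply: leq_trans (leq_mul IH (leqnn _)) _.
have := H1 r (leqnn _) => /andP[rN Pr].
have st := @stepP k m C L w z x y (fun n => P n || (i - r <= n < i)) (i - r - 1) 1 [:: i - r] cL.
have {}st := st (introT orP (or_introl Pw)) (introT orP (or_introl Pz)).
have {}st := st ltac:(rewrite /= negb_or Pr /=; lia) rN (leqnn _).
have {}st := st ltac:(move=> u uN Pu a; rewrite inE; apply/eqP; exact: (H2 r u (leqnn _) uN Pu a)).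
apply: leq_trans st _; rewrite leq_eqVlt; apply/orP; left; apply/eqP.
apply: eq_cntP => n _ /=; case: (P n) => /=; lia.
Qed.

Lemma final k C (L : 'I_(theta_nv k) -> {set C}) (w z : 'I_(theta_nv k)) (x y : C)
   (P : nat -> bool) : (forall n, n < theta_nv k -> P n) ->
  cnt (theta_adj k) L x w z x y (TS k P) =
  #|[set f : {ffun 'I_(theta_nv k) -> C} |
       [&& proper_L_coloring L f, f w == x & f z == y]]|.
Proof.
move=> HP; have -> : TS k P = setT by apply/setP => u; rewrite !inE (HP _ (ltn_ord u)).
rewrite /cnt; apply: eq_card => f; rewrite !inE /good /proper_L_coloring.
have -> : [forall v, (v \in [set: 'I_(theta_nv k)]) ==> (f v \in L v)] = [forall v, f v \in L v].
  by apply: eq_forallb => v; rewrite in_setT.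
have -> : [forall u, forall v, [&& u \in [set: 'I_(theta_nv k)], v \in setT & theta_adj k u v] ==> (f u != f v)]
   = [forall u, forall v, theta_adj k u v ==> (f u != f v)].
  by apply: eq_forallb => u; apply: eq_forallb => v; rewrite !in_setT.
have -> : [forall v, (v \notin [set: 'I_(theta_nv k)]) ==> (f v == x)] = true.
  by apply/forallP => v; rewrite in_setT.
by rewrite /= !andbA.
Qed.

Ltac prep := repeat match goal with
 | H : is_true (_ <= cnt _ _ _ _ _ _ _ _) |- _ => clear H
 | H : is_true (_ || _) |- _ => let H1 := fresh "H" in case/orP: H => H1
 | H : is_true (_ && _) |- _ => let H1 := fresh "H" in let H2 := fresh "H" in case/andP: H => H1 H2
 | H : is_true (@eq_op _ _ _) |- _ => move/eqP: H => H
 | H : ?a = ?b |- _ => is_var a; subst a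
 | H : ?a = ?b |- _ => is_var b; subst b
 end.
Ltac side := repeat (let H := fresh "H" in intro H); rewrite /= ?inE;
  unfold theta_dir_edge, theta_nv in *; prep; lia.
Ltac trivw := rewrite /=; side.

Lemma caseB (k m : nat) (C : finType) (L : 'I_(theta_nv k) -> {set C})
    (w z : 'I_(theta_nv k)) (x y : C) (e p : nat) :
  2 <= k -> 4 <= m -> (forall v, #|L v| = m) -> e <= 1 -> 2 <= p <= 3 ->
  ((w : nat) == 1 - e) || (w == 5 - p :> nat) ->
  ((z : nat) == 1 - e) || (z == 5 - p :> nat) ->
  1 <= cnt (theta_adj k) L x w z x y (TS k (fun n => (n == 1 - e) || (n == 5 - p))) ->
  (m - 1) ^ (2 * k - 1) * (m - 2) ^ 2 <=
  #|[set f : {ffun 'I_(theta_nv k) -> C} |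
       [&& proper_L_coloring L f, f w == x & f z == y]]|.
Proof.
move=> k2 m4 cL he hp hw0 hz0 h0'.
  have h1 := leq_trans (leq_mul h0' (leqnn (m-1)))
    (@stepP k m C L w z x y (fun n => (n == 1 - e) || (n == 5 - p)) e 1 [:: 5 - p] cL
       ltac:(trivw) ltac:(trivw) ltac:(side) ltac:(side) (leqnn _) ltac:(side)).
  have h2 := leq_trans (leq_mul h1 (leqnn (m-2)))
    (@stepP k m C L w z x y (fun n => ((n == 1 - e) || (n == 5 - p)) || (n == e)) p 2 [:: 0; 1] cL
       ltac:(trivw) ltac:(trivw) ltac:(side) ltac:(side) (leqnn _) ltac:(side)).
  have h3 := leq_trans (leq_mul h2 (leqnn (m-1)))
    (@stepP k m C L w z x y (fun n => (((n == 1 - e) || (n == 5 - p)) || (n == e)) || (n == p)) 4 1 [:: 0] cL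
       ltac:(trivw) ltac:(trivw) ltac:(side) ltac:(side) (leqnn _) ltac:(side)).
  have h4 := leq_trans (leq_mul h3 (leqnn ((m-1)^(2*k-3))))
    (@tfpath k m C L w z x y (fun n => ((((n == 1 - e) || (n == 5 - p)) || (n == e)) || (n == p)) || (n == 4)) 4 (2*k-3) cL
       ltac:(trivw) ltac:(trivw) ltac:(side) ltac:(side)).
  have h5 := leq_trans (leq_mul h4 (leqnn (m-2)))
    (@stepP k m C L w z x y (fun n => (((((n == 1 - e) || (n == 5 - p)) || (n == e)) || (n == p)) || (n == 4)) || (4 < n <= 4 + (2*k-3))) (2*k+2) 2 [:: 2*k+1; 1] cL
       ltac:(trivw) ltac:(trivw) ltac:(side) ltac:(side) (leqnn _) ltac:(side)).
  rewrite -(@final _ _ _ _ _ _ _ (fun n => ((((((n == 1 - e) || (n == 5 - p)) || (n == e)) || (n == p)) || (n == 4)) || (4 < n <= 4 + (2*k-3))) || (n == 2*k+2))); last by side.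
  apply: leq_trans h5.
  have -> : (m-1)^(2*k-1) = (m-1)^(2*k-3) * (m-1)^2 by rewrite -expnD; congr expn; lia.
  move: ((m-1)^(2*k-3)) => X; lia.
Qed.

Lemma caseE (k m : nat) (C : finType) (L : 'I_(theta_nv k) -> {set C})
    (w z : 'I_(theta_nv k)) (x y : C) :
  2 <= k -> 4 <= m -> (forall v, #|L v| = m) ->
  (w : nat) == 0 -> (z : nat) == 4 ->
  1 <= cnt (theta_adj k) L x w z x y (TS k (fun n => (n == 0) || (n == 4))) ->
  (m - 1) ^ (2 * k - 1) * (m - 2) ^ 2 <=
  #|[set f : {ffun 'I_(theta_nv k) -> C} |
       [&& proper_L_coloring L f, f w == x & f z == y]]|.
Proof.
move=> k2 m4 cL hw0 hz0 h0'.
  have h1 := leq_trans (leq_mul h0' (leqnn ((m-1)^(2*k-2))))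
    (@tfpath k m C L w z x y (fun n => (n == 0) || (n == 4)) (4) (2*k-2) cL
       ltac:(trivw) ltac:(trivw) ltac:(side) ltac:(side)).
  have h2 := leq_trans (leq_mul h1 (leqnn (m-1)))
    (@stepP k m C L w z x y (fun n => ((n == 0) || (n == 4)) || ((4) < n <= (4) + (2*k-2))) (1) 1 [:: 2*k+2] cL
       ltac:(trivw) ltac:(trivw) ltac:(side) ltac:(side) (leqnn _) ltac:(side)).
  have h3 := leq_trans (leq_mul h2 (leqnn (m-2)))
    (@stepP k m C L w z x y (fun n => (((n == 0) || (n == 4)) || ((4) < n <= (4) + (2*k-2))) || (n == 1)) (2) 2 [:: 0; 1] cL
       ltac:(trivw) ltac:(trivw) ltac:(side) ltac:(side) (leqnn _) ltac:(side)).
  have h4 := leq_trans (leq_mul h3 (leqnn (m-2)))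
    (@stepP k m C L w z x y (fun n => ((((n == 0) || (n == 4)) || ((4) < n <= (4) + (2*k-2))) || (n == 1)) || (n == 2)) (3) 2 [:: 0; 1] cL
       ltac:(trivw) ltac:(trivw) ltac:(side) ltac:(side) (leqnn _) ltac:(side)).
  rewrite -(@final _ _ _ _ _ _ _ (fun n => (((((n == 0) || (n == 4)) || ((4) < n <= (4) + (2*k-2))) || (n == 1)) || (n == 2)) || (n == 3))); last by side.
  apply: leq_trans h4.
  have -> : (m-1)^(2*k-1) = (m-1)^(2*k-2) * (m-1)^1 by rewrite -expnD; congr expn; lia.
  move: ((m-1)^(2*k-2)) => X; lia.
Qed.

Lemma caseF (k m : nat) (C : finType) (L : 'I_(theta_nv k) -> {set C})
    (w z : 'I_(theta_nv k)) (x y : C) (a : nat) :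
  2 <= k -> 4 <= m -> (forall v, #|L v| = m) ->
  4 <= a <= 2 * k + 1 -> ((w : nat) == a) && ((z : nat) == a.+1) ->
  1 <= cnt (theta_adj k) L x w z x y (TS k (fun n => (n == a) || (n == a.+1))) ->
  (m - 1) ^ (2 * k - 1) * (m - 2) ^ 2 <=
  #|[set f : {ffun 'I_(theta_nv k) -> C} |
       [&& proper_L_coloring L f, f w == x & f z == y]]|.
Proof.
move=> k2 m4 cL ha /andP[hw0 hz0] h0'.
  have h1 := leq_trans (leq_mul h0' (leqnn ((m-1)^(2*k+1-a))))
    (@tfpath k m C L w z x y (fun n => (n == a) || (n == a.+1)) (a.+1) (2*k+1-a) cL
       ltac:(trivw) ltac:(trivw) ltac:(side) ltac:(side)).
  have h2 := leq_trans (leq_mul h1 (leqnn (m-1)))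
    (@stepP k m C L w z x y (fun n => ((n == a) || (n == a.+1)) || ((a.+1) < n <= (a.+1) + (2*k+1-a))) (1) 1 [:: 2*k+2] cL
       ltac:(trivw) ltac:(trivw) ltac:(side) ltac:(side) (leqnn _) ltac:(side)).
  have h3 := leq_trans (leq_mul h2 (leqnn ((m-1)^(a-4))))
    (@tbpath k m C L w z x y (fun n => (((n == a) || (n == a.+1)) || ((a.+1) < n <= (a.+1) + (2*k+1-a))) || (n == 1)) (a) (a-4) cL
       ltac:(trivw) ltac:(trivw) ltac:(side) ltac:(side) ltac:(side)).
  have h4 := leq_trans (leq_mul h3 (leqnn (m-1)))
    (@stepP k m C L w z x y (fun n => ((((n == a) || (n == a.+1)) || ((a.+1) < n <= (a.+1) + (2*k+1-a))) || (n == 1)) || ((a) - (a-4) <= n < (a))) (0) 1 [:: 4] cL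
       ltac:(trivw) ltac:(trivw) ltac:(side) ltac:(side) (leqnn _) ltac:(side)).
  have h5 := leq_trans (leq_mul h4 (leqnn (m-2)))
    (@stepP k m C L w z x y (fun n => (((((n == a) || (n == a.+1)) || ((a.+1) < n <= (a.+1) + (2*k+1-a))) || (n == 1)) || ((a) - (a-4) <= n < (a))) || (n == 0)) (2) 2 [:: 0; 1] cL
       ltac:(trivw) ltac:(trivw) ltac:(side) ltac:(side) (leqnn _) ltac:(side)).
  have h6 := leq_trans (leq_mul h5 (leqnn (m-2)))
    (@stepP k m C L w z x y (fun n => ((((((n == a) || (n == a.+1)) || ((a.+1) < n <= (a.+1) + (2*k+1-a))) || (n == 1)) || ((a) - (a-4) <= n < (a))) || (n == 0)) || (n == 2)) (3) 2 [:: 0; 1] cL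
       ltac:(trivw) ltac:(trivw) ltac:(side) ltac:(side) (leqnn _) ltac:(side)).
  rewrite -(@final _ _ _ _ _ _ _ (fun n => (((((((n == a) || (n == a.+1)) || ((a.+1) < n <= (a.+1) + (2*k+1-a))) || (n == 1)) || ((a) - (a-4) <= n < (a))) || (n == 0)) || (n == 2)) || (n == 3))); last by side.
  apply: leq_trans h6.
  have -> : (m-1)^(2*k-1) = (m-1)^(2*k+1-a) * (m-1)^(a-4) * (m-1)^2 by rewrite -!expnD; congr expn; lia.
  move: ((m-1)^(2*k+1-a)) ((m-1)^(a-4)) => X Y; lia.
Qed.

Lemma caseG (k m : nat) (C : finType) (L : 'I_(theta_nv k) -> {set C})
    (w z : 'I_(theta_nv k)) (x y : C) :
  2 <= k -> 4 <= m -> (forall v, #|L v| = m) ->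
  (w : nat) == 2*k+2 -> (z : nat) == 1 ->
  1 <= cnt (theta_adj k) L x w z x y (TS k (fun n => (n == 2*k+2) || (n == 1))) ->
  (m - 1) ^ (2 * k - 1) * (m - 2) ^ 2 <=
  #|[set f : {ffun 'I_(theta_nv k) -> C} |
       [&& proper_L_coloring L f, f w == x & f z == y]]|.
Proof.
move=> k2 m4 cL hw0 hz0 h0'.
  have h1 := leq_trans (leq_mul h0' (leqnn ((m-1)^(2*k-2))))
    (@tbpath k m C L w z x y (fun n => (n == 2*k+2) || (n == 1)) (2*k+2) (2*k-2) cL
       ltac:(trivw) ltac:(trivw) ltac:(side) ltac:(side) ltac:(side)).
  have h2 := leq_trans (leq_mul h1 (leqnn (m-1)))
    (@stepP k m C L w z x y (fun n => ((n == 2*k+2) || (n == 1)) || ((2*k+2) - (2*k-2) <= n < (2*k+2))) (0) 1 [:: 4] cL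
       ltac:(trivw) ltac:(trivw) ltac:(side) ltac:(side) (leqnn _) ltac:(side)).
  have h3 := leq_trans (leq_mul h2 (leqnn (m-2)))
    (@stepP k m C L w z x y (fun n => (((n == 2*k+2) || (n == 1)) || ((2*k+2) - (2*k-2) <= n < (2*k+2))) || (n == 0)) (2) 2 [:: 0; 1] cL
       ltac:(trivw) ltac:(trivw) ltac:(side) ltac:(side) (leqnn _) ltac:(side)).
  have h4 := leq_trans (leq_mul h3 (leqnn (m-2)))
    (@stepP k m C L w z x y (fun n => ((((n == 2*k+2) || (n == 1)) || ((2*k+2) - (2*k-2) <= n < (2*k+2))) || (n == 0)) || (n == 2)) (3) 2 [:: 0; 1] cL
       ltac:(trivw) ltac:(trivw) ltac:(side) ltac:(side) (leqnn _) ltac:(side)).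
  rewrite -(@final _ _ _ _ _ _ _ (fun n => (((((n == 2*k+2) || (n == 1)) || ((2*k+2) - (2*k-2) <= n < (2*k+2))) || (n == 0)) || (n == 2)) || (n == 3))); last by side.
  apply: leq_trans h4.
  have -> : (m-1)^(2*k-1) = (m-1)^(2*k-2) * (m-1)^1 by rewrite -expnD; congr expn; lia.
  move: ((m-1)^(2*k-2)) => X; lia.
Qed.


Ltac base_tac h0 := apply: (leq_trans h0); rewrite leq_eqVlt; apply/orP; left; apply/eqP;
  apply: eq_cntP => ? _; side.

Lemma main_dir (k m : nat) (C : finType) (L : 'I_(theta_nv k) -> {set C})
    (w z : 'I_(theta_nv k)) (x y : C) :
  2 <= k -> 4 <= m ->
  (forall v, #|L v| = m) ->
  theta_dir_edge k w z ->
  x \in L w -> y \in L z -> x != y ->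
  (m - 1) ^ (2 * k - 1) * (m - 2) ^ 2 <=
  #|[set f : {ffun 'I_(theta_nv k) -> C} |
       [&& proper_L_coloring L f, f w == x & f z == y]]|.
Proof.
move=> k2 m4 cL ed xL yL xy.
have wz : w != z by apply: contraTneq ed => ->; move: (@theta_irr k z); rewrite /theta_adj orbb => ->.
have h0 : 1 <= cnt (theta_adj k) L x w z x y (TS k (fun n => (n == w) || (n == z))).
  have -> : TS k (fun n => (n == w) || (n == z)) = [set w; z].
    by apply/setP => u; rewrite !inE -!val_eqE.
  exact: (base (@theta_irr k) xL yL xy wz).
have wN := ltn_ord w; have zN := ltn_ord z.
have : ((((w : nat) == 0) && (z == 2 :> nat) || (w == 2 :> nat) && (z == 1 :> nat)
           || (w == 0 :> nat) && (z == 3 :> nat) || (w == 3 :> nat) && (z == 1 :> nat))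
         \/ ((w == 0 :> nat) && (z == 4 :> nat))
         \/ ((4 <= w) && (z == w.+1 :> nat) && (z <= 2 * k + 2))
         \/ ((w == 2 * k + 2 :> nat) && (z == 1 :> nat))).
  move: ed; rewrite /theta_dir_edge /theta_nv in wN zN *; lia.
clear ed xL yL xy wz.
case=> [hc|[/andP[hw hz]|[hc|/andP[hw hz]]]].
- case/orP: hc => [/orP[/orP[hc|hc]|hc]|hc]; move/andP: hc => [hw hz].
  + apply: (@caseB k m C L w z x y 1 3) => //; [side|side|base_tac h0].
  + apply: (@caseB k m C L w z x y 0 3) => //; [side|side|base_tac h0].
  + apply: (@caseB k m C L w z x y 1 2) => //; [side|side|base_tac h0].
  + apply: (@caseB k m C L w z x y 0 2) => //; [side|side|base_tac h0].
- apply: caseE => //; base_tac h0.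
- apply: (@caseF k m C L w z x y w) => //; [side|side|base_tac h0].
- apply: caseG => //; base_tac h0.
Qed.

Theorem lemma23 (k m : nat) (C : finType) (L : 'I_(theta_nv k) -> {set C})
    (w z : 'I_(theta_nv k)) (x y : C) :
  2 <= k -> 4 <= m ->
  (forall v, #|L v| = m) ->
  theta_adj k w z ->
  x \in L w :\: L z -> y \in L z :\: L w ->
  (m - 1) ^ (2 * k - 1) * (m - 2) ^ 2 <=
  #|[set f : {ffun 'I_(theta_nv k) -> C} |
       [&& proper_L_coloring L f, f w == x & f z == y]]|.
Proof.
move=> k2 m4 cL + /setDP[xw xz] /setDP[yz yw].
have xy : x != y by apply: contraNneq xz => ->.
case/orP => ed; first exact: main_dir.
have -> : [set f : {ffun 'I_(theta_nv k) -> C} | [&& proper_L_coloring L f, f w == x & f z == y]]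
  = [set f | [&& proper_L_coloring L f, f z == y & f w == x]].
  by apply/setP => f; rewrite !inE (andbC (f w == x)).
by apply: main_dir => //; rewrite eq_sym.
Qed.
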